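(* Let $\mathcal A$ be an ordered normed algebra with unit $e$ whose algebra cone $\mathcal A^+$ is normal with normality constant $\alpha$. Let $a,b\in\mathcal A$, with at least one of $a$ and $b$ positive, and suppose that for some $\varepsilon>0$ there exists $x\in\mathcal A$ with $\|x\|\leq\varepsilon$ such that $ab-ba\geq e+x$. Then $$\|a\|\cdot\|b\|\geq \frac{1}{2\alpha}\ln\frac{1}{\alpha\varepsilon}.$$ In particular, if the norm on $\mathcal A$ is monotone, then $\|a\|\cdot\|b\|\geq \frac12\ln\frac1\varepsilon$.
   Context: A normed algebra $\mathcal A$ (real or complex, with submultiplicative norm) with unit $e$. A cone is a nonempty subset $\mathcal A^+\subseteq\mathcal A$ with $\mathcal A^++\mathcal A^+\subseteq\mathcal A^+$, $\lambda\mathcal A^+\subseteq\mathcal A^+$ for all $\lambda\geq 0$, and $\mathcal A^+\cap(-\mathcal A^+)=\{0\}$; it induces the partial order $a\leq b \iff b-a\in\mathcal A^+$. Elements of $\mathcal A^+$ are called positive. The cone is an algebra cone if $\mathcal A^+\cdot\mathcal A^+\subseteq\mathcal A^+$ and $e\in\mathcal A^+$; then $\mathcal A$ is called an ordered normed algebra. The cone is normal with normality constant $\alpha$ (necessarily $\alpha\ge 1$) if $0\leq x\leq y$ implies $\|x\|\leq\alpha\|y\|$. The norm is monotone if one can take $\alpha=1$. *)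

(* Defs.v *)
From HB Require Import structures.
From mathcomp Require Import all_boot all_order all_algebra.
From mathcomp Require Import reals exp.
Set Implicit Arguments. Unset Strict Implicit. Unset Printing Implicit Defensive.
Import Order.TTheory GRing.Theory Num.Theory.
Local Open Scope ring_scope.

Definition is_algebra_norm (R : realType) (A : algType R) (N : A -> R) : Prop :=
  (forall x : A, 0 <= N x) /\
  (forall x : A, N x = 0 -> x = 0) /\
  (N 0 = 0) /\
  (forall (k : R) (x : A), N (k *: x) = `|k| * N x) /\
  (forall x y : A, N (x + y) <= N x + N y) /\
  (forall x y : A, N (x * y) <= N x * N y).

Definition is_cone (R : realType) (A : algType R) (P : A -> Prop) : Prop :=
  (exists x, P x) /\
  (forall x y, P x -> P y -> P (x + y)) /\
  (forall (l : R) x, 0 <= l -> P x -> P (l *: x)) /\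
  (forall x, P x -> P (- x) -> x = 0).

Definition is_algebra_cone (R : realType) (A : algType R) (P : A -> Prop) : Prop :=
  is_cone P /\ (forall x y, P x -> P y -> P (x * y)) /\ P 1.

Definition cone_le (R : realType) (A : algType R) (P : A -> Prop) (a b : A) : Prop :=
  P (b - a).

Definition normal_cone (R : realType) (A : algType R) (P : A -> Prop)
  (N : A -> R) (alpha : R) : Prop :=
  forall x y : A, cone_le P 0 x -> cone_le P x y -> N x <= alpha * N y.

(* Main.v *)
Require Import Defs.
From HB Require Import structures.
From mathcomp Require Import all_boot all_order all_algebra.
From mathcomp Require Import reals exp sequences.
From mathcomp Require Import ring lra.
Import Order.TTheory GRing.Theory Num.Theory.
Local Open Scope ring_scope.





Lemma expsum (R:realType) (c:R) n : 0 <= c ->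
  \sum_(0 <= j < n) c ^+ j / j`!%:R <= expR c.
Proof.
move=> c0.
have := @nondecreasing_cvgn_le _ (series (exp_coeff c)) _ (is_cvg_series_exp_coeff c) n.
apply.
apply: nondecreasing_series => k _ _; exact: exp_coeff_ge0.
Qed.

Lemma ident (A : ringType) (p q w xn x : A) (n : nat) :
 (p * (p * w)) * q - q * (p * (p * w)) - (p * xn + x * (p * w)) - (p * w) *+ n.+2 =
 p * ((p * w) * q - q * (p * w) - xn - w *+ n.+1) + (p * q - q * p - (1 + x)) * (p * w).
Proof.
set m := n.+1.
rewrite [(p * w) *+ m.+1]mulrS.
rewrite !(mulrDr, mulrDl, mulrBr, mulrBl, mulrnAr, mul1r, mulrA, mulrN, mulNr, opprD).
set a1 := p * p * w * q. set a2 := q * p * p * w. set a3 := p * xn. set a4 := x * p * w.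
set a5 := p * q * p * w. set a6 := (p * w) *+ m. set a7 := p * w.
clearbody a1 a2 a3 a4 a5 a6 a7.
rewrite !addrA.
rewrite [RHS](ACl ((2*5)*1*6*3*8*7*4)%AC) /= addNr add0r.
done.
Qed.

Lemma core (R : realType) (A : algType R) (N : A -> R) (P : A -> Prop)
  (alpha : R) (p q : A) (eps : R) (x : A) :
  is_algebra_norm N -> is_algebra_cone P -> normal_cone P N alpha ->
  P p -> 0 < eps -> N x <= eps ->
  cone_le P (1 + x) (p * q - q * p) ->
  1 <= alpha /\ ln (alpha * eps)^-1 <= 2 * alpha * (N p * N q).
Proof.
move=> [N0 [Nz [N00 [NZ [ND NM]]]]] [[[z0 Pz0] [PD [PZ Panti]]] [PM P1]] Hn Pp eps0 Nx Hc.
have P0 : P 0 by rewrite -(scale0r z0); apply: PZ.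
have NN y : N (- y) = N y by rewrite -scaleN1r NZ normrN1 mul1r.
have NB y w : N (y - w) <= N y + N w by rewrite -(NN w) ND.
have N1 : 1 <= N 1.
  have n1 : N 1 != 0 by apply/eqP => /Nz /eqP; rewrite oner_eq0.
  have n1p : 0 < N 1 by rewrite lt_def n1 N0.
  have := NM 1 1; rewrite mulr1 => h.
  by rewrite -(ler_pM2l n1p) mulr1.
have al1 : 1 <= alpha.
  have := Hn 1 1; rewrite /cone_le subr0 subrr => /(_ P1 P0) h.
  have n1p : 0 < N 1 by apply: lt_le_trans N1.
  by rewrite -(ler_pM2r n1p) mul1r.
split => //.
set s := N p; set t := N q.
have s0 : 0 <= s := N0 p. have t0 : 0 <= t := N0 q.
have Ppow n : P (p ^+ n) by elim: n => [|n IH]; rewrite ?expr0 // exprS; apply: PM.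
have Npow n : N (p ^+ n.+1) <= s ^+ n.+1.
  elim: n => [|n IH]; first by rewrite !expr1.
  rewrite exprS [s ^+ n.+2]exprS; apply: le_trans (NM _ _) _.
  by apply: ler_wpM2l.
have Pdif y w : P y -> P w -> P (y + w) := PD y w.
have key n : exists xn, N xn <= n.+1%:R * s ^+ n * eps /\
   P (p ^+ n.+1 * q - q * p ^+ n.+1 - xn - p ^+ n *+ n.+1).
  elim: n => [|n [xn [Nxn Pxn]]].
    exists x; split; first by rewrite expr0 mulr1 mul1r.
    move: Hc; rewrite /cone_le expr1 expr0 mulr1n.
    by rewrite opprD addrA addrAC.
  exists (p * xn + x * p ^+ n.+1); split.
    apply: le_trans (ND _ _) _.
    have h1 : N (p * xn) <= s * (n.+1%:R * s ^+ n * eps).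
      by apply: le_trans (NM _ _) _; apply: ler_wpM2l.
    have h2 : N (x * p ^+ n.+1) <= eps * s ^+ n.+1.
      apply: le_trans (NM _ _) _; apply: ler_pM => //; exact: N0.
    apply: le_trans (lerD h1 h2) _.
    have -> : n.+2%:R * s ^+ n.+1 * eps = s * (n.+1%:R * s ^+ n * eps) + eps * s ^+ n.+1.
      by rewrite exprS -addn1 natrD; ring.
    done.
  rewrite !exprS ident; rewrite exprS in Pxn.
  apply: PD; first exact: PM.
  by apply: PM => //; rewrite -exprS.
have al0 : 0 <= alpha by apply: le_trans al1.
set v := fun n => N (p ^+ n).
have step n : n.+1%:R * v n <= 2 * alpha * t * v n.+1 + n.+1%:R * alpha * eps * s ^+ n.
  have [xn [Nxn Pxn]] := key n.
  have := Hn (p ^+ n *+ n.+1) (p ^+ n.+1 * q - q * p ^+ n.+1 - xn).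
  rewrite /cone_le subr0 => /(_ _ Pxn).
  rewrite -scaler_nat => /(_ (PZ _ _ (ler0n _ _) (Ppow n))).
  rewrite NZ ger0_norm // => h; apply: le_trans h _.
  have h1 : N (p ^+ n.+1 * q - q * p ^+ n.+1 - xn) <= v n.+1 * t + t * v n.+1 + n.+1%:R * s ^+ n * eps.
    apply: le_trans (NB _ _) _; apply: lerD => //.
    apply: le_trans (NB _ _) _; apply: lerD; exact: NM.
  have := ler_wpM2l al0 h1 => h2; apply: le_trans h2 _.
  rewrite le_eqVlt; apply/orP; left; apply/eqP; ring.
set K := 2 * alpha * t. set c := s * K. set d := alpha * eps.
have K0 : 0 <= K by rewrite /K !mulr_ge0.
have c0 : 0 <= c by rewrite /c mulr_ge0.
have d0 : 0 < d by rewrite /d mulr_gt0 // (lt_le_trans ltr01 al1).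
set S := fun n => \sum_(0 <= j < n) c ^+ j / j`!%:R.
have ystep n : 1 - d * S n <= v n * K ^+ n / n`!%:R.
  elim: n => [|n IH].
    by rewrite /S big_geq // mulr0 subr0 expr0 mulr1 fact0 divr1.
  rewrite /S big_nat_recr //= -/(S n).
  have Fp : 0 < n`!%:R :> R by rewrite ltr0n fact_gt0.
  have mp : 0 < n.+1%:R :> R by rewrite ltr0n.
  have aux : (v n - d * s ^+ n) * K ^+ n / n`!%:R <= v n.+1 * K ^+ n.+1 / n.+1`!%:R.
    rewrite factS natrM.
    have -> : (v n - d * s ^+ n) * K ^+ n / n`!%:R =
       (n.+1%:R * (v n - d * s ^+ n)) * (K ^+ n / (n.+1%:R * n`!%:R)).
      by field; have := ler0n R n; lra.
    have -> : v n.+1 * K ^+ n.+1 / (n.+1%:R * n`!%:R) =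
       (v n.+1 * K) * (K ^+ n / (n.+1%:R * n`!%:R)).
      by rewrite exprS; field; have := ler0n R n; lra.
    apply: ler_wpM2r; first by rewrite divr_ge0 ?exprn_ge0 // mulr_ge0 // ltW.
    have := step n; rewrite -/K /d; lra.
  apply: le_trans aux.
  have -> : (v n - d * s ^+ n) * K ^+ n / n`!%:R = v n * K ^+ n / n`!%:R - d * (c ^+ n / n`!%:R).
    rewrite /c [(s * K) ^+ n]exprMn; ring.
  lra.
have -> : 2 * alpha * (s * t) = c by rewrite /c /K; ring.
have Sexp n : S n <= expR c by apply: expsum.
have ub n : v n.+1 * K ^+ n.+1 / n.+1`!%:R <= c ^+ n.+1 / n.+1`!%:R.
  have e1 : c ^+ n.+1 / n.+1`!%:R = s ^+ n.+1 * (K ^+ n.+1 / n.+1`!%:R).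
    by rewrite /c [(s * K) ^+ _]exprMn mulrA.
  rewrite e1 -mulrA; apply: ler_wpM2r; last exact: Npow.
  by rewrite mulr_ge0 ?exprn_ge0 // invr_ge0 ler0n.
have ec0 : 0 < expR c := expR_gt0 c.
case: (lerP 1 (d * expR c)) => hc.
  have hd : d^-1 <= expR c by rewrite -(ler_pM2l d0) mulfV ?gt_eqF.
  by rewrite -[X in _ <= X](expRK c) ler_ln // posrE ?invr_gt0.
exfalso.
set eta := 1 - d * expR c.
have eta0 : 0 < eta by rewrite /eta subr_gt0.
have lb n : eta <= c ^+ n / n`!%:R.
  case: n => [|m]; first by rewrite expr0 fact0 divr1 /eta; have := mulr_ge0 (ltW d0) (ltW ec0); lra.
  apply: le_trans (ub m); apply: le_trans (ystep m.+1).
  have := Sexp m.+1; have := ler_wpM2l (ltW d0) (Sexp m.+1); rewrite /eta; lra.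
have Sl n : eta *+ n <= S n.
  rewrite /S; have := sumr_const_nat n 0 eta; rewrite subn0 => <-.
  by apply: ler_sum => j _; apply: lb.
set n := (Num.truncn (expR c / eta)).+1.
have h1 := Num.Theory.truncnS_gt (expR c / eta).
have h2 : expR c < eta *+ n by rewrite -mulr_natl -ltr_pdivrMr // mulrC.
have := le_trans (Sl n) (Sexp n); lra.
Qed.

Lemma core_sym (R : realType) (A : algType R) (N : A -> R) (P : A -> Prop)
  (alpha : R) (a b : A) (eps : R) (x : A) :
  is_algebra_norm N -> is_algebra_cone P -> normal_cone P N alpha ->
  (P a \/ P b) -> 0 < eps -> N x <= eps ->
  cone_le P (1 + x) (a * b - b * a) ->
  1 <= alpha /\ ln (alpha * eps)^-1 <= 2 * alpha * (N a * N b).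
Proof.
move=> hN hC hn [Pa|Pb] e0 Nx Hc; first exact: (@core R A N P alpha a b eps x hN hC hn Pa e0 Nx Hc).
have NN : N (- a) = N a.
  by case: hN => _ [_ [_ [NZ _]]]; rewrite -scaleN1r NZ normrN1 mul1r.
have Hc' : cone_le P (1 + x) (b * - a - - a * b).
  by move: Hc; rewrite /cone_le mulrN mulNr opprK (addrC (- (b * a))).
have [al1 H] := @core R A N P alpha b (-a) eps x hN hC hn Pb e0 Nx Hc'.
by split => //; rewrite NN (mulrC (N b)) in H.
Qed.

Theorem theorem2p4 (R : realType) (A : algType R) (N : A -> R) (P : A -> Prop)
  (alpha : R) (a b : A) (eps : R) (x : A) :
  is_algebra_norm N -> is_algebra_cone P -> normal_cone P N alpha ->
  (P a \/ P b) -> 0 < eps -> N x <= eps ->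
  cone_le P (1 + x) (a * b - b * a) ->
  N a * N b >= (2 * alpha)^-1 * ln (alpha * eps)^-1 /\
  (normal_cone P N 1 -> N a * N b >= 2^-1 * ln eps^-1).
Proof.
move=> hN hC hn hab e0 Nx Hc.
have [al1 H] := @core_sym R A N P alpha a b eps x hN hC hn hab e0 Nx Hc.
split.
  have a0 : 0 < 2 * alpha by rewrite mulr_gt0 // (lt_le_trans ltr01 al1).
  by rewrite (ler_pdivrMl _ _ a0).
move=> hn1.
have [_ H1] := @core_sym R A N P 1 a b eps x hN hC hn1 hab e0 Nx Hc.
rewrite mul1r mulr1 in H1.
by rewrite (ler_pdivrMl _ _ (ltr0Sn R 1)).
Qed.
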